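(* For $n>0$ define $f_n:\mathbb R\to\mathbb R$ by $f_n(x)=\left(1+\frac{x}{\sqrt n}\right)^n e^{-\sqrt n\,x}\,\mathbf 1_{[-\sqrt n,\infty)}(x)$. Then: (1) if $x\ge0$ and $l>n>0$, then $f_l(x)\le f_n(x)\le(2/\sqrt e)^n e^{-\sqrt n\,x/2}$; (2) if $x\le0$ and $l>n>0$, then $f_n(x)\le f_l(x)\le e^{-x^2/2}$; (3) $f_n(x)\to e^{-x^2/2}$ pointwise as $n\to\infty$. *)

(* Defs.v *)
From Stdlib Require Import Reals Lra Lia.
Open Scope R_scope.

Definition fn (n : nat) (x : R) : R :=
  if Rle_dec (- sqrt (INR n)) x
  then (1 + x / sqrt (INR n)) ^ n * exp (- sqrt (INR n) * x)
  else 0.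

(* Main.v *)
Require Import Defs.
From Stdlib Require Import Reals Lra Lia ZArith.
From Coquelicot Require Import Coquelicot.
Open Scope R_scope.

Lemma incr_le (f df : R -> R) (a b : R) : a <= b ->
  (forall t, a <= t <= b -> is_derive f t (df t)) ->
  (forall t, a <= t <= b -> 0 <= df t) -> f a <= f b.
Proof.
intros hab hd hp.
destruct (MVT_gen f a b df) as [c [hc e]].
- intros t ht. apply hd. rewrite Rmin_left in ht by lra. rewrite Rmax_right in ht by lra. lra.
- intros t ht. rewrite Rmin_left in ht by lra. rewrite Rmax_right in ht by lra.
  apply continuity_pt_filterlim. apply (ex_derive_continuous (K:=R_AbsRing) (V:=R_NormedModule)). exists (df t). apply hd. lra.
- rewrite Rmin_left in hc by lra. rewrite Rmax_right in hc by lra.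
  assert (0 <= df c * (b - a)). { apply Rmult_le_pos. apply hp; lra. lra. }
  lra.
Qed.

Lemma decr_le (f df : R -> R) (a b : R) : a <= b ->
  (forall t, a <= t <= b -> is_derive f t (df t)) ->
  (forall t, a <= t <= b -> df t <= 0) -> f b <= f a.
Proof.
intros hab hd hp.
assert (- f a <= - f b); [|lra].
apply (incr_le (fun t => - f t) (fun t => - df t)); auto.
- intros t ht. apply (is_derive_opp (K:=R_AbsRing) (V:=R_NormedModule)). auto.
- intros t ht. specialize (hp t ht). lra.
Qed.

Definition g (y : R) := ln (1 + y) - y + y ^ 2 / 2.
Definition psi (y : R) := 2 * ln (1 + y) - y / (1 + y) - y.

Lemma g_der y : -1 < y -> is_derive g y (y ^ 2 / (1 + y)).
Proof. intros h. unfold g. auto_derive. lra. field. lra. Qed.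

Lemma psi_der y : -1 < y -> is_derive psi y (- y ^ 2 / (1 + y) ^ 2).
Proof. intros h. unfold psi. auto_derive. lra. field. lra. Qed.

Lemma psi0 : psi 0 = 0.
Proof. unfold psi. rewrite Rplus_0_r, ln_1. field. Qed.
Lemma g0 : g 0 = 0.
Proof. unfold g. rewrite Rplus_0_r, ln_1. field. Qed.

Lemma psi_nonpos y : 0 <= y -> psi y <= 0.
Proof.
intros h. rewrite <- psi0. apply (decr_le psi (fun t => - t ^ 2 / (1 + t) ^ 2)); auto.
- intros t ht. apply psi_der. lra.
- intros t ht. assert (0 < (1+t)^2) by (apply pow_lt; lra).
  assert (0 <= t^2 / (1+t)^2). { apply Rdiv_le_0_compat; [nra|lra]. }
  unfold Rdiv in *. lra.
Qed.

Lemma psi_nonneg y : -1 < y <= 0 -> 0 <= psi y.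
Proof.
intros h. rewrite <- psi0. apply (decr_le psi (fun t => - t ^ 2 / (1 + t) ^ 2)); try lra.
- intros t ht. apply psi_der. lra.
- intros t ht. assert (0 < (1+t)^2) by (apply pow_lt; lra).
  assert (0 <= t^2 / (1+t)^2). { apply Rdiv_le_0_compat; [nra|lra]. }
  unfold Rdiv in *. lra.
Qed.

Lemma g_nonpos y : -1 < y <= 0 -> g y <= 0.
Proof.
intros h. rewrite <- g0. apply (incr_le g (fun t => t ^ 2 / (1 + t))); try lra.
- intros t ht. apply g_der. lra.
- intros t ht. apply Rdiv_le_0_compat; [nra|lra].
Qed.

Lemma g_nonneg y : 0 <= y -> 0 <= g y.
Proof.
intros h. rewrite <- g0. apply (incr_le g (fun t => t ^ 2 / (1 + t))); try lra.
- intros t ht. apply g_der. lra.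
- intros t ht. apply Rdiv_le_0_compat; [nra|lra].
Qed.

Definition k (y : R) := g y - y ^ 3.
Lemma k_der y : -1 < y -> is_derive k y (y ^ 2 / (1 + y) - 3 * y ^ 2).
Proof. intros h. unfold k. apply (is_derive_minus (K:=R_AbsRing) (V:=R_NormedModule)).
 apply g_der; lra. auto_derive. auto. ring. Qed.
Lemma k_derneg y : -2/3 < y -> y ^ 2 / (1 + y) - 3 * y ^ 2 <= 0.
Proof. intros h.
  assert (y ^ 2 / (1 + y) - 3 * y ^ 2 = y^2 * (-2 - 3*y) / (1+y)) by (field; lra).
  rewrite H. assert (0 <= y^2 * (2 + 3*y) / (1+y)).
  { apply Rdiv_le_0_compat; [apply Rmult_le_pos; nra|lra]. }
  assert (y^2 * (-2 - 3*y) / (1+y) = - (y^2 * (2 + 3*y) / (1+y))) by (field; lra).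
  lra.
Qed.

Lemma g_cube y : -1/2 <= y -> Rabs (g y) <= Rabs y ^ 3.
Proof.
intros h. destruct (Rle_lt_dec 0 y) as [hy|hy].
- assert (k y <= k 0).
  { apply (decr_le k (fun t => t ^ 2 / (1 + t) - 3 * t ^ 2)); auto.
    intros t ht; apply k_der; lra. intros t ht; apply k_derneg; lra. }
  unfold k in H. rewrite g0 in H. pose proof (g_nonneg y hy).
  rewrite Rabs_pos_eq by lra. rewrite Rabs_pos_eq by lra. lra.
- assert (k 0 <= k y).
  { apply (decr_le k (fun t => t ^ 2 / (1 + t) - 3 * t ^ 2)); try lra.
    intros t ht; apply k_der; lra. intros t ht; apply k_derneg; lra. }
  unfold k in H. rewrite g0 in H. pose proof (g_nonpos y ltac:(lra)).
  rewrite Rabs_left1 by lra. rewrite Rabs_left by lra. 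
  replace ((-y)^3) with (- y^3) by ring. lra.
Qed.

Definition H (s x : R) := s * s * ln (1 + x / s) - s * x.

Lemma H_der s x : 0 < s -> 0 < s + x -> is_derive (fun s => H s x) s (s * psi (x / s)).
Proof.
intros hs hsx. assert (0 < 1 + x / s).
{ replace (1 + x/s) with ((s + x) / s) by (field; lra). apply Rdiv_lt_0_compat; lra. }
unfold H, psi. auto_derive. split; [lra|split;[lra|auto]].
unfold Rdiv in *. set (L := ln (1 + x * / s)). field. split; lra.
Qed.

Lemma exp_le a b : a <= b -> exp a <= exp b.
Proof. intros [h|h]. left; apply exp_increasing; auto. subst; lra. Qed.

Lemma nat_unbounded A : exists n : nat, A < INR n.
Proof.
destruct (archimed (Rabs A)) as [h _].
assert (0 < up (Rabs A))%Z. { apply lt_IZR. pose proof (Rabs_pos A). simpl. lra. }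
exists (Z.to_nat (up (Rabs A))). rewrite INR_IZR_INZ, Z2Nat.id by lia.
pose proof (Rle_abs A). lra.
Qed.

Lemma exp_pow_n a n : exp a ^ n = exp (INR n * a).
Proof.
induction n. simpl. rewrite Rmult_0_l, exp_0. auto.
rewrite S_INR. simpl. rewrite IHn, <- exp_plus. f_equal. ring.
Qed.

Lemma fn_exp n x : (0 < n)%nat -> - sqrt (INR n) < x -> fn n x = exp (H (sqrt (INR n)) x).
Proof.
intros hn hx. unfold fn. destruct (Rle_dec _ _) as [_|h]; [|lra].
set (s := sqrt (INR n)) in *.
assert (hs : 0 < s) by (apply sqrt_lt_R0; apply lt_0_INR; auto).
assert (0 < 1 + x / s).
{ replace (1 + x/s) with ((s + x) / s) by (field; lra). apply Rdiv_lt_0_compat; lra. }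
rewrite <- (exp_ln ((1 + x/s)^n)) by (apply pow_lt; auto).
rewrite ln_pow by auto. rewrite <- exp_plus. unfold H. f_equal.
replace (INR n) with (s * s) by (apply sqrt_sqrt; apply pos_INR). ring.
Qed.

Lemma fn_zero n x : (0 < n)%nat -> x <= - sqrt (INR n) -> fn n x = 0.
Proof.
intros hn hx. unfold fn. destruct (Rle_dec _ _) as [h|h]; [|auto].
assert (x = - sqrt (INR n)) by lra. subst.
assert (hs : 0 < sqrt (INR n)) by (apply sqrt_lt_R0; apply lt_0_INR; auto).
replace (1 + - sqrt (INR n) / sqrt (INR n)) with 0 by (field; lra).
rewrite pow_i by auto. ring.
Qed.

Lemma fn_nonneg n x : (0 < n)%nat -> 0 <= fn n x.
Proof.
intros hn. destruct (Rle_lt_dec x (- sqrt (INR n))).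
- rewrite fn_zero; auto; lra.
- rewrite fn_exp; auto. left; apply exp_pos.
Qed.

Lemma H_g s x : 0 < s -> H s x = s * s * g (x / s) - x ^ 2 / 2.
Proof. intros hs. unfold H, g. unfold Rdiv. set (L := ln (1 + x * / s)). field. lra. Qed.

Lemma sqrt_pos_n n : (0 < n)%nat -> 0 < sqrt (INR n).
Proof. intros; apply sqrt_lt_R0; apply lt_0_INR; auto. Qed.

Lemma sqrt_mono n l : (n < l)%nat -> sqrt (INR n) < sqrt (INR l).
Proof. intros; apply sqrt_lt_1; try apply pos_INR. apply lt_INR; auto. Qed.

Lemma part1a n l x : 0 <= x -> (0 < n < l)%nat -> fn l x <= fn n x.
Proof.
intros hx [hn hl].
pose proof (sqrt_pos_n n hn). pose proof (sqrt_mono n l hl).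
rewrite !fn_exp; try lia; try lra.
apply exp_le.
apply (decr_le (fun s => H s x) (fun s => s * psi (x / s))); try lra.
- intros t ht. apply H_der; lra.
- intros t ht. assert (psi (x/t) <= 0). { apply psi_nonpos. apply Rdiv_le_0_compat; lra. } nra.
Qed.

Lemma sqrt_e : sqrt (exp 1) = exp (1/2).
Proof.
replace (exp 1) with (exp (1/2) * exp (1/2)). apply sqrt_square. left; apply exp_pos.
rewrite <- exp_plus. f_equal. lra.
Qed.

Lemma part1b n x : 0 <= x -> (0 < n)%nat ->
  fn n x <= (2 / sqrt (exp 1)) ^ n * exp (- sqrt (INR n) * x / 2).
Proof.
intros hx hn. pose proof (sqrt_pos_n n hn). set (s := sqrt (INR n)) in *.
unfold fn. fold s. destruct (Rle_dec _ _) as [_|h]; [|lra].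
set (y := x / s).
assert (hy : 0 <= y) by (apply Rdiv_le_0_compat; lra).
assert (hn' : INR n = s * s) by (symmetry; apply sqrt_sqrt; apply pos_INR).
assert (E1 : exp (- s * x) = exp (- y / 2) ^ n * exp (- s * x / 2)).
{ rewrite exp_pow_n, <- exp_plus. f_equal. rewrite hn'. unfold y. field. lra. }
assert (E2 : exp (- s * x / 2) = exp (- y / 2) ^ n).
{ rewrite exp_pow_n. f_equal. rewrite hn'. unfold y. field. lra. }
replace ((1 + y) ^ n * exp (- s * x)) with (((1 + y) * exp (- y / 2)) ^ n * exp (- s * x / 2))
  by (rewrite E1, Rpow_mult_distr; fold y; ring).
apply Rmult_le_compat_r. left; apply exp_pos.
apply pow_incr. split. apply Rmult_le_pos. lra. left; apply exp_pos.
rewrite sqrt_e.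
pose proof (exp_ineq1_le ((y - 1)/2)).
assert (exp ((y-1)/2) = exp (y/2) * exp (-(1/2))) by (rewrite <- exp_plus; f_equal; field).
assert (exp (y/2) * exp (- y/2) = 1) by (rewrite <- exp_plus, <- exp_0; f_equal; field).
assert (exp (-(1/2)) * exp (1/2) = 1) by (rewrite <- exp_plus, <- exp_0; f_equal; field).
pose proof (exp_pos (1/2)). pose proof (exp_pos (-y/2)).
assert (2 / exp (1/2) = 2 * exp (-(1/2))). { field_simplify_eq; [|lra]. nra. }
rewrite H7.
assert ((1 + (y - 1) / 2) * exp (-y/2) <= exp ((y-1)/2) * exp (-y/2)).
{ apply Rmult_le_compat_r; lra. }
rewrite H2 in H8.
replace (exp (y / 2) * exp (- (1 / 2)) * exp (- y / 2)) with (exp (- (1/2)) * (exp (y / 2) * exp (- y / 2))) in H8 by ring.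
rewrite H3 in H8. lra.
Qed.

Lemma part2a n l x : x <= 0 -> (0 < n < l)%nat -> fn n x <= fn l x.
Proof.
intros hx [hn hl].
pose proof (sqrt_pos_n n hn). pose proof (sqrt_mono n l hl).
destruct (Rle_lt_dec x (- sqrt (INR n))).
- rewrite (fn_zero n); auto. apply fn_nonneg; lia.
- rewrite !fn_exp; try lia; try lra.
  apply exp_le.
  apply (incr_le (fun s => H s x) (fun s => s * psi (x / s))); try lra.
  + intros t ht. apply H_der; lra.
  + intros t ht. assert (0 <= psi (x/t)). { apply psi_nonneg. split.
      apply (Rmult_lt_reg_r t); try lra. unfold Rdiv; rewrite Rmult_assoc, Rinv_l; lra.
      apply (Rmult_le_reg_r t); try lra. unfold Rdiv; rewrite Rmult_assoc, Rinv_l; lra. } nra.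
Qed.

Lemma part2b l x : x <= 0 -> (0 < l)%nat -> fn l x <= exp (- x ^ 2 / 2).
Proof.
intros hx hl. pose proof (sqrt_pos_n l hl).
destruct (Rle_lt_dec x (- sqrt (INR l))).
- rewrite fn_zero; auto. left; apply exp_pos.
- rewrite fn_exp; auto. apply exp_le. rewrite H_g by auto.
  assert (g (x / sqrt (INR l)) <= 0). { apply g_nonpos. split.
      apply (Rmult_lt_reg_r (sqrt (INR l))); try lra. unfold Rdiv; rewrite Rmult_assoc, Rinv_l; lra.
      apply (Rmult_le_reg_r (sqrt (INR l))); try lra. unfold Rdiv; rewrite Rmult_assoc, Rinv_l; lra. }
  assert (0 <= sqrt (INR l) * sqrt (INR l)) by nra. 
  assert (sqrt (INR l) * sqrt (INR l) * g (x / sqrt (INR l)) <= 0).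
  { apply Rmult_le_0_l; lra. }
  lra.
Qed.

Lemma H_cv x : Un_cv (fun n => H (sqrt (INR n)) x) (- x ^ 2 / 2).
Proof.
intros eps heps.
set (M := 2 * Rabs x + Rabs x ^ 3 / eps + 1).
assert (hM : 1 <= M). { unfold M. pose proof (Rabs_pos x).
  assert (0 <= Rabs x ^ 3 / eps) by (apply Rdiv_le_0_compat; [apply pow_le|]; lra). lra. }
destruct (nat_unbounded (M * M)) as [N hN]. exists N. intros n hn.
apply le_INR in hn.
assert (hs : M < sqrt (INR n)).
{ rewrite <- (sqrt_square M) by lra. apply sqrt_lt_1; nra. }
set (s := sqrt (INR n)) in *.
assert (s0 : 0 < s) by lra.
unfold R_dist. rewrite H_g by auto.
replace (s * s * g (x / s) - x ^ 2 / 2 - - x ^ 2 / 2) with (s * s * g (x / s)) by lra.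
rewrite Rabs_mult, Rabs_pos_eq by nra.
assert (hxs : Rabs (x / s) = Rabs x / s).
{ unfold Rdiv. rewrite Rabs_mult, Rabs_inv, (Rabs_pos_eq s) by lra. auto. }
assert (hax : 2 * Rabs x < s). { unfold M in hs. assert (0 <= Rabs x ^ 3 / eps) by (apply Rdiv_le_0_compat; [apply pow_le; apply Rabs_pos|]; lra). lra. }
assert (hq : Rabs x / s <= 1/2). { apply (Rmult_le_reg_r s); auto. unfold Rdiv; rewrite Rmult_assoc, Rinv_l; lra. }
assert (hg : Rabs (g (x / s)) <= (Rabs x / s) ^ 3).
{ rewrite <- hxs. apply g_cube. pose proof (Rle_abs (- (x/s))). rewrite Rabs_Ropp in H0. lra. }
assert (s * s * Rabs (g (x / s)) <= s * s * (Rabs x / s) ^ 3) by (apply Rmult_le_compat_l; nra).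
assert (e : s * s * (Rabs x / s) ^ 3 = Rabs x ^ 3 / s) by (field; lra).
assert (Rabs x ^ 3 / s < eps).
{ apply (Rmult_lt_reg_r s); auto. unfold Rdiv; rewrite Rmult_assoc, Rinv_l by lra.
  assert (Rabs x ^ 3 / eps < s) by (unfold M in hs; pose proof (Rabs_pos x); lra).
  apply (Rmult_lt_compat_r eps) in H1; auto. unfold Rdiv in H1. rewrite Rmult_assoc, Rinv_l in H1 by lra. lra. }
lra.
Qed.

Lemma part3 x : Un_cv (fun n => fn n x) (exp (- x ^ 2 / 2)).
Proof.
pose proof (continuity_seq exp _ _ (derivable_continuous _ derivable_exp (- x ^ 2 / 2)) (H_cv x)) as hc.
intros eps heps. destruct (hc eps heps) as [N1 hN1].
destruct (nat_unbounded ((Rabs x + 1) * (Rabs x + 1))) as [N0 hN0].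
exists (Nat.max N0 N1). intros n hn.
assert (hn0 : INR N0 <= INR n) by (apply le_INR; lia).
assert (0 < n)%nat. { apply INR_lt. simpl. pose proof (Rabs_pos x). nra. }
assert (Rabs x + 1 < sqrt (INR n)).
{ rewrite <- (sqrt_square (Rabs x + 1)) by (pose proof (Rabs_pos x); lra). apply sqrt_lt_1; try nra. pose proof (Rabs_pos x); nra. apply pos_INR. }
rewrite fn_exp; auto. apply hN1. lia.
pose proof (Rle_abs (-x)). rewrite Rabs_Ropp in H2. lra.
Qed.

Theorem lemma3p7 :
  (forall (n l : nat) (x : R), 0 <= x -> (0 < n < l)%nat ->
     fn l x <= fn n x /\
     fn n x <= (2 / sqrt (exp 1)) ^ n * exp (- sqrt (INR n) * x / 2)) /\
  (forall (n l : nat) (x : R), x <= 0 -> (0 < n < l)%nat ->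
     fn n x <= fn l x /\ fn l x <= exp (- x ^ 2 / 2)) /\
  (forall x : R, Un_cv (fun n => fn n x) (exp (- x ^ 2 / 2))).
Proof.
split; [|split].
- intros n l x hx hnl. split. apply part1a; auto. apply part1b; auto; lia.
- intros n l x hx hnl. split. apply part2a; auto. apply part2b; auto; lia.
- apply part3.
Qed.
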